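(* Let $b\ge2$ be an integer and let $\psi:\mathbb{R}\to\mathbb{R}$ be a $\mathbb{Z}$-periodic $C^1$ function which is not cohomologous to zero and satisfies $\int_0^1\psi(x)\,dx=0$. Then there exist $\gamma_1\in(0,1)$ and a positive integer $N$ such that for every $\gamma\in(\gamma_1,1)$ (with $\gamma>1/b$), $E(N,x)\ne\mathcal{A}^N\times\mathcal{A}^N$ for every $x\in\mathbb{R}$, where $E$ is computed with this $\gamma$ and $\psi$.
   Context: A $\mathbb{Z}$-periodic continuous $\psi$ is cohomologous to $0$ if there is a continuous $\mathbb{Z}$-periodic $f$ with $\psi(x)=f(bx)-f(x)$ for all $x$. $\mathcal{A}=\{0,\dots,b-1\}$. $S(x,\mathbf{i})=\sum_{n\ge1}\gamma^{n-1}\psi\big(\frac{x+i_1+i_2b+\cdots+i_nb^{n-1}}{b^n}\big)$ for $\mathbf{i}\in\mathcal{A}^{\mathbb{Z}^+}$, $S'=\partial_xS$. Sequences $\mathbf{i},\mathbf{j}$ are $(\varepsilon,\delta)$-tangent at $x_0$ if $|S(x_0,\mathbf{i})-S(x_0,\mathbf{j})|\le\varepsilon$ and $|S'(x_0,\mathbf{i})-S'(x_0,\mathbf{j})|\le\delta$. $E(q,x_0;\varepsilon,\delta)$: pairs $(\mathbf{k},\mathbf{l})\in\mathcal{A}^q\times\mathcal{A}^q$ such that some concatenations $\mathbf{ku},\mathbf{lv}$ are $(\varepsilon,\delta)$-tangent at $x_0$; $E(q,x_0)=\bigcap_{\varepsilon,\delta>0}E(q,x_0;\varepsilon,\delta)$.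 *)

(* Defs.v *)
From Stdlib Require Import Reals List Arith.
Open Scope R_scope.

Definition Zperiodic (f : R -> R) : Prop := forall x, f (x + 1) = f x.

Definition isC1 (f : R -> R) : Prop :=
  exists df : R -> R, (forall x, derivable_pt_lim f x (df x)) /\ continuity df.

Definition cohom_zero (b : nat) (psi : R -> R) : Prop :=
  exists f : R -> R, continuity f /\ Zperiodic f /\
    forall x, psi x = f (INR b * x) - f x.

(* sequences in A^{Z+} (A = {0,..,b-1}), indexed from 0: i 0 = i_1 *)
Definition valid_seq (b : nat) (i : nat -> nat) : Prop := forall n, (i n < b)%nat.

Definition word (b q : nat) (k : list nat) : Prop :=
  length k = q /\ Forall (fun a => (a < b)%nat) k.

Definition concat (k : list nat) (u : nat -> nat) : nat -> nat :=
  fun n => if Nat.ltb n (length k) then nth n k 0%nat else u (n - length k)%nat.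

Fixpoint digits (b : nat) (i : nat -> nat) (m : nat) : nat :=
  match m with
  | O => O
  | S m' => (digits b i m' + i m' * b ^ m')%nat
  end.

(* n-th term (0-based; corresponds to paper's index n+1) of the series S(x,i) *)
Definition Sterm (b : nat) (gamma : R) (psi : R -> R) (x : R) (i : nat -> nat)
  (n : nat) : R :=
  gamma ^ n * psi ((x + INR (digits b i (S n))) / INR b ^ (S n)).

Definition tangent (b : nat) (gamma : R) (psi : R -> R) (x0 eps delta : R)
  (i j : nat -> nat) : Prop :=
  exists (Si Sj : R -> R) (dSi dSj : R),
    (forall x, infinite_sum (Sterm b gamma psi x i) (Si x)) /\
    (forall x, infinite_sum (Sterm b gamma psi x j) (Sj x)) /\
    derivable_pt_lim Si x0 dSi /\ derivable_pt_lim Sj x0 dSj /\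
    Rabs (Si x0 - Sj x0) <= eps /\ Rabs (dSi - dSj) <= delta.

Definition E_eps (b : nat) (gamma : R) (psi : R -> R) (q : nat) (x0 eps delta : R)
  (k l : list nat) : Prop :=
  word b q k /\ word b q l /\
  exists u v, valid_seq b u /\ valid_seq b v /\
    tangent b gamma psi x0 eps delta (concat k u) (concat l v).

Definition E (b : nat) (gamma : R) (psi : R -> R) (q : nat) (x0 : R)
  (k l : list nat) : Prop :=
  forall eps delta, 0 < eps -> 0 < delta -> E_eps b gamma psi q x0 eps delta k l.

Definition E_full (b : nat) (gamma : R) (psi : R -> R) (q : nat) (x0 : R) : Prop :=
  forall k l, word b q k -> word b q l -> E b gamma psi q x0 k l.

(* Main.v *)
Require Import Defs.
From Stdlib Require Import Reals List Arith Lra Lia Classical ZArith.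
From Coquelicot Require Import Coquelicot.
Open Scope R_scope.


Fixpoint psum (f : nat -> R) (n : nat) : R :=
  match n with O => 0 | S n' => psum f n' + f n' end.

Lemma sum_f_R0_psum f m : sum_f_R0 f m = psum f (S m).
Proof. induction m; simpl in *; [lra| rewrite IHm; simpl; lra]. Qed.

Lemma psum_ext f g N : (forall n, (n < N)%nat -> f n = g n) -> psum f N = psum g N.
Proof. induction N; intros H; simpl; auto. rewrite IHN by (intros; apply H; lia). rewrite (H N) by lia. auto. Qed.

Lemma psum_minus f g N : psum (fun n => f n - g n) N = psum f N - psum g N.
Proof. induction N; simpl; [lra|]. rewrite IHN; lra. Qed.

Lemma psum_bound f c N : (forall n, (n < N)%nat -> Rabs (f n) <= c) -> Rabs (psum f N) <= INR N * c.
Proof.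
  induction N; intros H; cbn [psum].
  - rewrite Rabs_R0; simpl; lra.
  - rewrite S_INR. eapply Rle_trans; [apply Rabs_triang|].
    assert (H1 := IHN (fun n h => H n ltac:(lia))). assert (H2 := H N ltac:(lia)). lra.
Qed.

Lemma lim_bound (w : nat -> R) l c B N0 :
  Un_cv w l -> (forall m, (N0 <= m)%nat -> Rabs (w m - c) <= B) -> Rabs (l - c) <= B.
Proof.
  intros Hcv Hb. apply Rle_plus_epsilon. intros eps Heps.
  destruct (Hcv eps Heps) as [N HN].
  specialize (HN (Nat.max N N0) ltac:(lia)). specialize (Hb (Nat.max N N0) ltac:(lia)).
  unfold R_dist in HN. replace (l - c) with ((l - w (Nat.max N N0)) + (w (Nat.max N N0) - c)) by ring.
  eapply Rle_trans; [apply Rabs_triang|]. rewrite Rabs_minus_sym. lra.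
Qed.

Lemma tail_bound (t : nat -> R) (bb C : R) N :
  1 < bb -> (forall n, Rabs (t n) <= C / bb ^ (S n)) ->
  forall k, Rabs (psum t (N + k) - psum t N) <= C / (bb - 1) * (/ bb ^ N - / bb ^ (N + k)).
Proof.
  intros Hb Ht k. induction k.
  - rewrite Nat.add_0_r. replace (psum t N - psum t N) with 0 by ring.
    replace (/ bb ^ N - / bb ^ N) with 0 by ring. rewrite Rabs_R0; lra.
  - rewrite Nat.add_succ_r. simpl psum.
    replace (psum t (N + k) + t (N + k)%nat - psum t N) with ((psum t (N + k) - psum t N) + t (N+k)%nat) by ring.
    eapply Rle_trans; [apply Rabs_triang|].
    assert (Hp : 0 < bb ^ (N + k)) by (apply pow_lt; lra).
    specialize (Ht (N+k)%nat). simpl pow in Ht |- *.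
    replace (C / (bb - 1) * (/ bb ^ N - / (bb * bb ^ (N + k)))) with
      (C / (bb - 1) * (/ bb ^ N - / bb ^ (N + k)) + C / (bb * bb ^ (N + k))).
    + lra.
    + assert (bb - 1 <> 0) by lra. assert (bb <> 0) by lra. assert (bb ^ (N+k) <> 0) by lra.
      assert (bb ^ N <> 0) by (apply pow_nonzero; lra). field; auto.
Qed.

Lemma tail_bound' (t : nat -> R) (bb C : R) N m :
  1 < bb -> (forall n, Rabs (t n) <= C / bb ^ (S n)) -> (N <= m)%nat ->
  Rabs (psum t m - psum t N) <= C / (bb - 1) / bb ^ N.
Proof.
  intros Hb Ht Hm. replace m with (N + (m - N))%nat by lia.
  eapply Rle_trans; [apply tail_bound; eauto|].
  assert (0 <= C).
  { specialize (Ht 0%nat). assert (0 < bb ^ 1) by (apply pow_lt; lra).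
    assert (0 <= C / bb ^ 1) by (eapply Rle_trans; [apply Rabs_pos| exact Ht]).
    apply Rmult_le_reg_r with (/ bb ^ 1). apply Rinv_0_lt_compat; lra. lra. }
  assert (0 < bb ^ (N + (m - N))) by (apply pow_lt; lra).
  assert (0 < bb ^ N) by (apply pow_lt; lra).
  assert (0 < / bb ^ (N + (m - N))) by (apply Rinv_0_lt_compat; lra).
  assert (0 <= C / (bb - 1)) by (apply Rmult_le_pos; auto; left; apply Rinv_0_lt_compat; lra).
  replace (C / (bb - 1) / bb ^ N) with (C / (bb - 1) * / bb ^ N) by (unfold Rdiv; ring).
  apply Rmult_le_compat_l; lra.
Qed.

Lemma lip_from_deriv f f' L :
  (forall z, derivable_pt_lim f z (f' z)) -> (forall z, Rabs (f' z) <= L) ->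
  forall u v, Rabs (f u - f v) <= L * Rabs (u - v).
Proof.
  intros Hd Hb u v.
  destruct (Rtotal_order u v) as [Huv|[Huv|Huv]].
  - destruct (MVT_cor2 f f' u v Huv (fun c _ => Hd c)) as [c [Hc _]].
    rewrite Rabs_minus_sym, Hc, (Rabs_minus_sym u v), Rabs_mult.
    apply Rmult_le_compat_r; [apply Rabs_pos| apply Hb].
  - subst. replace (f v - f v) with 0 by ring. replace (v - v) with 0 by ring.
    rewrite Rabs_R0; lra.
  - destruct (MVT_cor2 f f' v u Huv (fun c _ => Hd c)) as [c [Hc _]].
    rewrite Hc, Rabs_mult.
    apply Rmult_le_compat_r; [apply Rabs_pos| apply Hb].
Qed.

Lemma deriv_le_lip f x l L :
  derivable_pt_lim f x l -> (forall h, Rabs (f (x + h) - f x) <= L * Rabs h) -> Rabs l <= L.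
Proof.
  intros Hd Hl. destruct (Rle_or_lt (Rabs l) L) as [|Hlt]; auto. exfalso.
  destruct (Hd (Rabs l - L) ltac:(lra)) as [del Hdel].
  assert (Hdp := cond_pos del).
  set (h := del / 2).
  assert (Hh0 : h <> 0) by (unfold h; lra).
  assert (Hhd : Rabs h < del) by (unfold h; rewrite Rabs_pos_eq; lra).
  specialize (Hdel h Hh0 Hhd). specialize (Hl h).
  assert (Hq : Rabs ((f (x + h) - f x) / h) <= L).
  { unfold Rdiv. rewrite Rabs_mult, Rabs_inv.
    assert (0 < Rabs h) by (apply Rabs_pos_lt; auto).
    apply Rmult_le_reg_r with (Rabs h); auto.
    rewrite Rmult_assoc, Rinv_l by lra. lra. }
  assert (Rabs l <= Rabs ((f (x + h) - f x) / h) + Rabs ((f (x + h) - f x) / h - l)).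
  { replace l with ((f (x + h) - f x) / h - ((f (x + h) - f x) / h - l)) at 1 by ring.
    eapply Rle_trans; [apply Rabs_triang|]. rewrite Rabs_Ropp. lra. }
  lra.
Qed.


Definition Pq (b:nat) (psi:R->R) g N (e:nat->R) x :=
  psum (fun n => g^n * psi ((x + e n)/INR b ^ S n)) N.
Definition dPq (b:nat) (df:R->R) g N (e:nat->R) x :=
  psum (fun n => g^n / INR b ^ S n * df ((x + e n)/INR b ^ S n)) N.

Lemma isd_plus (f g : R -> R) x a c : is_derive f x a -> is_derive g x c ->
  is_derive (fun y => f y + g y) x (a + c).
Proof. intros H1 H2. exact (is_derive_plus f g x a c H1 H2). Qed.

Lemma Pq_deriv b psi df g N e x : (0<b)%nat -> (forall x, derivable_pt_lim psi x (df x)) ->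
  derivable_pt_lim (Pq b psi g N e) x (dPq b df g N e x).
Proof.
  intros Hb Hd. apply is_derive_Reals. unfold Pq, dPq. induction N; cbn [psum].
  - auto_derive; auto.
  - apply isd_plus. exact IHN.
    assert (Hbp : 0 < INR b ^ S N) by (apply pow_lt; apply lt_0_INR; lia).
    assert (Hi : is_derive (fun x => (x + e N) / INR b ^ S N) x (/ INR b ^ S N)).
    { auto_derive; auto. simpl pow. ring. }
    assert (Hc := is_derive_comp psi _ x _ _ (proj2 (is_derive_Reals _ _ _) (Hd _)) Hi).
    assert (Hs := is_derive_scal _ x (g ^ N) _ Hc).
    replace (g ^ N / INR b ^ S N * df ((x + e N) / INR b ^ S N)) with
      (g ^ N * scal (/ INR b ^ S N) (df ((x + e N) / INR b ^ S N))).
    exact Hs.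
    unfold scal; simpl; unfold mult; simpl. field. assert (0 < INR b) by (apply lt_0_INR; lia). split; [apply pow_nonzero|]; lra.
Qed.

Lemma shift_nat (f : R -> R) : (forall x, f (x+1) = f x) -> forall x q, f (x + INR q) = f x.
Proof. intros H x q. induction q. simpl; rewrite Rplus_0_r; auto. rewrite S_INR, <- Rplus_assoc, H; auto. Qed.

Lemma df_per psi df : Zperiodic psi -> (forall x, derivable_pt_lim psi x (df x)) -> forall x, df (x+1) = df x.
Proof.
  intros Hp Hd x.
  assert (inner : is_derive (fun z => z+1) x 1) by (auto_derive; auto).
  assert (H1 : is_derive (fun z => psi (z+1)) x (scal 1 (df (x+1))))
    by exact (is_derive_comp psi (fun z => z+1) x _ _ (proj2 (is_derive_Reals _ _ _) (Hd (x+1))) inner).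
  apply is_derive_ext with (g := psi) in H1; [| intros; apply Hp].
  apply is_derive_Reals in H1. replace (scal 1 (df (x+1))) with (df (x+1)) in H1 by (unfold scal; simpl; unfold mult; simpl; ring). eapply uniqueness_limite; eauto.
Qed.

Definition aa b df g N x (J : nat) := dPq b df g N (fun _ => INR J) x.

Lemma bpos b : (2 <= b)%nat -> 1 < INR b.
Proof. intros H. apply (le_INR 2) in H. simpl in H. lra. Qed.

Lemma aa_period b psi df g N x J q : Zperiodic psi -> (forall x, derivable_pt_lim psi x (df x)) -> (2 <= b)%nat ->
  aa b df g N x (J + b^N * q) = aa b df g N x J.
Proof.
  intros Hp Hd Hb. assert (H1 := bpos b Hb).
  unfold aa, dPq; apply psum_ext; intros n Hn. f_equal.
  rewrite plus_INR, mult_INR, pow_INR.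
  replace ((x + (INR J + INR b ^ N * INR q)) / INR b ^ S n) with ((x + INR J)/INR b ^ S n + INR (b^(N - S n) * q)).
  apply shift_nat. apply (df_per psi); auto.
  assert (Hpw: INR b ^ N = INR b ^ S n * INR b ^ (N - S n)) by (rewrite <- pow_add; f_equal; lia).
  rewrite mult_INR, pow_INR, Hpw. field. apply pow_nonzero; lra.
Qed.

Lemma aa_succ b df g N x J : aa b df g N (x+1) J = aa b df g N x (S J).
Proof.
  unfold aa, dPq; apply psum_ext; intros n Hn. rewrite S_INR.
  replace (x + 1 + INR J) with (x + (INR J + 1)) by ring. auto.
Qed.

Lemma aa_mod b psi df g N x J : Zperiodic psi -> (forall x, derivable_pt_lim psi x (df x)) -> (2 <= b)%nat ->
  aa b df g N x J = aa b df g N x (J mod b^N).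
Proof.
  intros Hp Hd Hb.
  assert (b ^ N <> 0)%nat by (apply Nat.pow_nonzero; lia).
  rewrite (Nat.div_mod J (b^N)) at 1 by auto. rewrite Nat.add_comm. apply (aa_period b psi); auto.
Qed.

Lemma aa_split b psi df g m N x j J : Zperiodic psi -> (forall x, derivable_pt_lim psi x (df x)) -> (2 <= b)%nat ->
  aa b df g (m + N) x (j + b^m * J) = aa b df g m x j + g^m / INR b ^ m * aa b df g N ((x + INR j) / INR b ^ m) J.
Proof.
  intros Hp Hd Hb. assert (H1 := bpos b Hb).
  induction N.
  - rewrite Nat.add_0_r, (aa_period b psi) by auto. change (aa b df g 0 ((x + INR j)/INR b ^ m) J) with 0. ring.
  - rewrite Nat.add_succ_r. unfold aa, dPq in *; cbn [psum]. rewrite IHN.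
    replace (S (m + N)) with (m + S N)%nat by lia.
    assert (E: (x + INR (j + b^m*J)) / INR b ^ (m + S N) = ((x + INR j)/INR b ^ m + INR J)/INR b ^ (S N)).
    { rewrite plus_INR, mult_INR, pow_INR, pow_add. field. split; apply pow_nonzero; lra. }
    rewrite E, !pow_add. field. split; apply pow_nonzero; lra.
Qed.

Lemma ctn_plus (f g : R -> R) x : continuous f x -> continuous g x -> continuous (fun y => f y + g y) x.
Proof. intros H1 H2. exact (continuous_plus f g x H1 H2). Qed.
Lemma ctn_minus (f g : R -> R) x : continuous f x -> continuous g x -> continuous (fun y => f y - g y) x.
Proof. intros H1 H2. exact (continuous_minus f g x H1 H2). Qed.
Lemma ctn_scal (f : R -> R) c x : continuous f x -> continuous (fun y => c * f y) x.
Proof. intros H. exact (continuous_mult (fun _ => c) f x (continuous_const c x) H). Qed.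

Lemma aa_cont b df g N J x0 : continuity df -> (2 <= b)%nat ->
  continuous (fun x => aa b df g N x J) x0.
Proof.
  intros Hc Hb. assert (H1 := bpos b Hb). unfold aa, dPq. induction N; cbn [psum].
  - apply continuous_const.
  - apply ctn_plus; auto. apply ctn_scal.
    apply (continuous_comp (fun x => (x + INR J) / INR b ^ S N) df).
    + assert (Hx : ex_derive (fun x => (x + INR J) / INR b ^ S N) x0) by (auto_derive; auto).
      exact (ex_derive_continuous _ _ Hx).
    + apply continuity_pt_filterlim. apply Hc.
Qed.


Definition wordof (b N J : nat) : list nat := map (fun i => (J / b^i) mod b)%nat (seq 0 N).

Lemma wordof_word b N J : (0 < b)%nat -> word b N (wordof b N J).
Proof.
  intros Hb. split.
  - unfold wordof; rewrite length_map, length_seq; auto.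
  - unfold wordof. apply Forall_forall. intros a Ha. apply in_map_iff in Ha.
    destruct Ha as [i [<- _]]. apply Nat.mod_upper_bound; lia.
Qed.

Lemma digits_wordof b N J u m : (0<b)%nat -> (m <= N)%nat ->
  digits b (Defs.concat (wordof b N J) u) m = (J mod b^m)%nat.
Proof.
  intros Hb. induction m; intros Hm.
  - cbn [digits]. rewrite Nat.pow_0_r, Nat.mod_1_r. auto.
  - cbn [digits]. rewrite IHm by lia.
    unfold Defs.concat. assert (Hl: length (wordof b N J) = N) by (unfold wordof; rewrite length_map, length_seq; auto).
    rewrite Hl. replace (Nat.ltb m N) with true by (symmetry; apply Nat.ltb_lt; lia).
    unfold wordof.
    rewrite (nth_indep _ 0%nat ((fun i => (J / b^i) mod b)%nat 0%nat)) by (rewrite length_map, length_seq; lia).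
    rewrite (map_nth (fun i : nat => (J / b ^ i) mod b)%nat (seq 0 N) 0%nat m), seq_nth by lia. simpl (0 + m)%nat.
    rewrite Nat.pow_succ_r', (Nat.mul_comm b), Nat.Div0.mod_mul_r. lia.
Qed.

Lemma dPq_wordof b psi df g N J u x : Zperiodic psi -> (forall x, derivable_pt_lim psi x (df x)) -> (2 <= b)%nat ->
  dPq b df g N (fun n => INR (digits b (Defs.concat (wordof b N J) u) (S n))) x = aa b df g N x J.
Proof.
  intros Hp Hd Hb. assert (H1 := bpos b Hb).
  unfold aa, dPq; apply psum_ext; intros n Hn. rewrite digits_wordof by lia.
  f_equal.
  assert (b ^ S n <> 0)%nat by (apply Nat.pow_nonzero; lia).
  rewrite (Nat.div_mod J (b^(S n))) at 2 by auto.
  rewrite plus_INR, mult_INR, pow_INR.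
  replace ((x + (INR b ^ S n * INR (J / b ^ S n) + INR (J mod b ^ S n))) / INR b ^ S n)
    with ((x + INR (J mod b ^ S n)) / INR b ^ S n + INR (J / b ^ S n)).
  - rewrite shift_nat; auto. apply (df_per psi); auto.
  - field. apply pow_nonzero; lra.
Qed.

Lemma pow_01 g n : 0 <= g <= 1 -> 0 <= g ^ n <= 1.
Proof. intros H. induction n; simpl; nra. Qed.

Lemma one_side b psi df M g N x0 (i : nat -> nat) (Si : R -> R) dSi :
  (2<=b)%nat -> (forall x, derivable_pt_lim psi x (df x)) -> (forall x, Rabs (df x) <= M) -> 0 <= g <= 1 ->
  (forall x, infinite_sum (Sterm b g psi x i) (Si x)) -> derivable_pt_lim Si x0 dSi ->
  Rabs (dSi - dPq b df g N (fun n => INR (digits b i (S n))) x0) <= M / (INR b - 1) / INR b ^ N.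
Proof.
  intros Hb Hd HM Hg Hs Hdi. assert (H1 := bpos b Hb).
  set (e := fun n => INR (digits b i (S n))).
  set (R0 := fun y => Si y - Pq b psi g N e y).
  assert (HR : derivable_pt_lim R0 x0 (dSi - dPq b df g N e x0)).
  { unfold R0. exact (derivable_pt_lim_minus Si (Pq b psi g N e) x0 _ _ Hdi (Pq_deriv b psi df g N e x0 ltac:(lia) Hd)). }
  apply (deriv_le_lip R0 x0); auto.
  intros h. unfold R0.
  replace (Si (x0 + h) - Pq b psi g N e (x0 + h) - (Si x0 - Pq b psi g N e x0)) with
    ((Si (x0 + h) - Si x0) - (Pq b psi g N e (x0 + h) - Pq b psi g N e x0)) by ring.
  set (t := fun n => Sterm b g psi (x0+h) i n - Sterm b g psi x0 i n).
  assert (Ht : forall n, Rabs (t n) <= (M * Rabs h) / INR b ^ S n).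
  { intros n. unfold t, Sterm.
    assert (Hbp : 0 < INR b ^ S n) by (apply pow_lt; lra).
    destruct (pow_01 g n Hg) as [Hg0 Hg1].
    rewrite <- Rmult_minus_distr_l, Rabs_mult, (Rabs_pos_eq (g ^ n)) by auto.
    assert (Hl := lip_from_deriv psi df M Hd HM ((x0 + h + INR (digits b i (S n))) / INR b ^ S n)
       ((x0 + INR (digits b i (S n))) / INR b ^ S n)).
    replace ((x0 + h + INR (digits b i (S n))) / INR b ^ S n - (x0 + INR (digits b i (S n))) / INR b ^ S n)
      with (h / INR b ^ S n) in Hl by (field; lra).
    unfold Rdiv in Hl. rewrite Rabs_mult, (Rabs_pos_eq (/ INR b ^ S n)) in Hl by (left; apply Rinv_0_lt_compat; lra).
    set (D := Rabs (psi ((x0 + h + INR (digits b i (S n))) / INR b ^ S n) - psi ((x0 + INR (digits b i (S n))) / INR b ^ S n))) in *.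
    assert (0 <= D) by apply Rabs_pos.
    apply Rle_trans with D; [nra|]. unfold Rdiv; rewrite Rmult_assoc; exact Hl. }
  assert (Hcv : Un_cv (fun m => sum_f_R0 (Sterm b g psi (x0+h) i) m - sum_f_R0 (Sterm b g psi x0 i) m) (Si (x0+h) - Si x0))
    by (apply CV_minus; [apply Hs|apply Hs]).
  replace (M / (INR b - 1) / INR b ^ N * Rabs h) with (M * Rabs h / (INR b - 1) / INR b ^ N)
    by (assert (INR b ^ N <> 0) by (apply pow_nonzero; lra); field; split; lra).
  apply (lim_bound _ _ _ _ N Hcv).
  intros m Hm. rewrite !sum_f_R0_psum.
  change (Pq b psi g N e (x0 + h)) with (psum (Sterm b g psi (x0+h) i) N).
  change (Pq b psi g N e x0) with (psum (Sterm b g psi x0 i) N).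
  replace (psum (Sterm b g psi (x0 + h) i) (S m) - psum (Sterm b g psi x0 i) (S m) -
    (psum (Sterm b g psi (x0 + h) i) N - psum (Sterm b g psi x0 i) N)) with (psum t (S m) - psum t N)
    by (unfold t; rewrite !psum_minus; ring).
  apply tail_bound'; auto.
Qed.


Lemma Efull_bound b psi df M g N x : Zperiodic psi -> (forall x, derivable_pt_lim psi x (df x)) ->
  (forall x, Rabs (df x) <= M) -> (2 <= b)%nat -> 0 <= g <= 1 ->
  E_full b g psi N x -> forall J J',
  Rabs (aa b df g N x J - aa b df g N x J') <= 2 * (M / (INR b - 1) / INR b ^ N).
Proof.
  intros Hp Hd HM Hb Hg HE J J'.
  apply Rle_plus_epsilon. intros del Hdel.
  destruct (HE (wordof b N J) (wordof b N J') (wordof_word b N J ltac:(lia)) (wordof_word b N J' ltac:(lia)) 1 del Rlt_0_1 Hdel)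
    as [_ [_ [u [v [_ [_ Ht]]]]]].
  destruct Ht as [Si [Sj [dSi [dSj [HSi [HSj [HdSi [HdSj [_ Hdd]]]]]]]]].
  pose proof (one_side b psi df M g N x _ Si dSi Hb Hd HM Hg HSi HdSi) as H1.
  pose proof (one_side b psi df M g N x _ Sj dSj Hb Hd HM Hg HSj HdSj) as H2.
  rewrite (dPq_wordof b psi) in H1, H2 by auto.
  replace (aa b df g N x J - aa b df g N x J') with
    (-(dSi - aa b df g N x J) + (dSi - dSj) + (dSj - aa b df g N x J')) by ring.
  eapply Rle_trans; [apply Rabs_triang|].
  eapply Rle_trans; [apply Rplus_le_compat_r; apply Rabs_triang|].
  rewrite Rabs_Ropp. lra.
Qed.

Lemma one_minus_pow g n : 0 <= g <= 1 -> 1 - g ^ n <= INR n * (1 - g).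
Proof.
  intros Hg. induction n.
  - simpl. lra.
  - rewrite S_INR. simpl. destruct (pow_01 g n Hg). nra.
Qed.

Lemma aa_gamma b df M g N x J : (forall x, Rabs (df x) <= M) -> (2 <= b)%nat -> 0 <= g <= 1 ->
  Rabs (aa b df g N x J - aa b df 1 N x J) <= INR N * (INR N * (1 - g) * M).
Proof.
  intros HM Hb Hg. assert (H1 := bpos b Hb).
  unfold aa, dPq. rewrite <- psum_minus. apply psum_bound. intros n Hn.
  rewrite pow1.
  set (d := df ((x + INR J) / INR b ^ S n)).
  assert (Hbp : 1 <= INR b ^ S n) by (apply pow_R1_Rle; lra).
  replace (g ^ n / INR b ^ S n * d - 1 / INR b ^ S n * d) with (- (1 - g ^ n) * / INR b ^ S n * d)
    by (unfold Rdiv; ring).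
  rewrite !Rabs_mult, Rabs_Ropp.
  destruct (pow_01 g n Hg).
  rewrite (Rabs_pos_eq (1 - g ^ n)) by lra.
  rewrite (Rabs_pos_eq (/ INR b ^ S n)) by (left; apply Rinv_0_lt_compat; lra).
  assert (/ INR b ^ S n <= 1) by (rewrite <- Rinv_1; apply Rinv_le_contravar; lra).
  assert (0 < / INR b ^ S n) by (apply Rinv_0_lt_compat; lra).
  assert (Hd := HM ((x + INR J) / INR b ^ S n)). fold d in Hd.
  assert (0 <= Rabs d) by apply Rabs_pos.
  assert (Hn1 := one_minus_pow g n Hg).
  assert (INR n <= INR N) by (apply le_INR; lia).
  assert (0 <= 1 - g) by lra.
  assert (INR n * (1 - g) <= INR N * (1 - g)) by nra.
  assert ((1 - g ^ n) * / INR b ^ S n <= INR N * (1 - g)) by nra.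
  assert (0 <= (1 - g ^ n) * / INR b ^ S n) by nra.
  nra.
Qed.

Lemma close_bound f x B : continuity_pt f x ->
  (forall eps, 0 < eps -> exists z, Rabs (z - x) < eps /\ Rabs (f z) <= B) -> Rabs (f x) <= B.
Proof.
  intros Hc H. apply Rle_plus_epsilon. intros eps Heps.
  destruct (Hc eps Heps) as [alp [Halp Hz]].
  destruct (H alp Halp) as [z [Hz1 Hz2]].
  destruct (Req_dec z x) as [<-|Hne]; [lra|].
  assert (R_dist (f z) (f x) < eps) by (apply Hz; split; [split; [exact I| auto] | exact Hz1]).
  unfold R_dist in *.
  replace (f x) with (f z - (f z - f x)) by ring.
  eapply Rle_trans; [apply Rabs_triang|]. rewrite Rabs_Ropp. lra.
Qed.

Lemma nat_ceil t : 0 <= t -> exists j : nat, t <= INR j <= t + 1.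
Proof.
  intros Ht. destruct (archimed t) as [H1 H2].
  assert (0 < IZR (up t)) by lra.
  assert (0 <= up t)%Z by (apply le_IZR; lra).
  exists (Z.to_nat (up t)). rewrite INR_IZR_INZ, Z2Nat.id by auto. lra.
Qed.


Lemma spread b psi df C : Zperiodic psi -> (forall x, derivable_pt_lim psi x (df x)) -> continuity df ->
  (2<=b)%nat -> 0 <= C ->
  (forall N, exists x, forall J J', Rabs (aa b df 1 N x J - aa b df 1 N x J') <= C / INR b ^ N) ->
  forall N x J J', Rabs (aa b df 1 N x J - aa b df 1 N x J') <= C / INR b ^ N.
Proof.
  intros Hp Hd Hc Hb HC H N x J J'.
  assert (H1 := bpos b Hb).
  set (Q := fun z => forall J J', Rabs (aa b df 1 N z J - aa b df 1 N z J') <= C / INR b ^ N).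
  assert (Sa : forall m, exists x', forall j, Q ((x' + INR j) / INR b ^ m)).
  { intros m. destruct (H (m + N)%nat) as [x' Hx']. exists x'. intros j K K'.
    assert (E1 := aa_split b psi df 1 m N x' j K Hp Hd Hb).
    assert (E2 := aa_split b psi df 1 m N x' j K' Hp Hd Hb).
    specialize (Hx' (j + b^m*K)%nat (j + b^m*K')%nat). rewrite E1, E2, pow1 in Hx'.
    set (A := aa b df 1 N ((x' + INR j) / INR b ^ m) K) in *.
    set (A' := aa b df 1 N ((x' + INR j) / INR b ^ m) K') in *.
    assert (Hbm : 0 < INR b ^ m) by (apply pow_lt; lra).
    assert (HbN : 0 < INR b ^ N) by (apply pow_lt; lra).
    replace (aa b df 1 m x' j + 1 / INR b ^ m * A - (aa b df 1 m x' j + 1 / INR b ^ m * A'))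
      with (/ INR b ^ m * (A - A')) in Hx' by (field; lra).
    rewrite Rabs_mult, (Rabs_pos_eq (/ INR b ^ m)) in Hx' by (left; apply Rinv_0_lt_compat; lra).
    rewrite pow_add in Hx'.
    apply Rmult_le_reg_l with (/ INR b ^ m); [apply Rinv_0_lt_compat; lra|].
    replace (/ INR b ^ m * (C / INR b ^ N)) with (C / (INR b ^ m * INR b ^ N)) by (field; lra).
    exact Hx'. }
  assert (Sb : forall z, Q z -> Q (z - 1)).
  { intros z Hq.
    assert (key : forall K, aa b df 1 N (z - 1) K = aa b df 1 N z (K + b^N - 1)).
    { intros K. rewrite <- (aa_period b psi df 1 N (z-1) K 1) by auto.
      assert (b ^ N <> 0)%nat by (apply Nat.pow_nonzero; lia).
      replace (K + b^N*1)%nat with (S (K + b^N - 1)) by lia.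
      rewrite <- aa_succ. replace (z - 1 + 1) with z by ring. auto. }
    intros K K'. rewrite !key. apply Hq. }
  assert (Sc : forall z p, Q z -> Q (z - INR p)).
  { intros z p Hq. induction p.
    - simpl. replace (z - 0) with z by ring. auto.
    - rewrite S_INR. replace (z - (INR p + 1)) with ((z - INR p) - 1) by ring. auto. }
  assert (Sd : forall eps, 0 < eps -> exists z, Rabs (z - x) < eps /\ Q z).
  { intros eps Heps.
    assert (Hib : Rabs (/ INR b) < 1).
    { rewrite Rabs_pos_eq by (left; apply Rinv_0_lt_compat; lra).
      rewrite <- Rinv_1. apply Rinv_lt_contravar; lra. }
    destruct (pow_lt_1_zero _ Hib eps Heps) as [m Hm]. specialize (Hm m (le_n m)).
    rewrite pow_inv in Hm.
    assert (Hbm : 0 < INR b ^ m) by (apply pow_lt; lra).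
    rewrite Rabs_pos_eq in Hm by (left; apply Rinv_0_lt_compat; lra).
    destruct (Sa m) as [x' Hx'].
    destruct (nat_ceil (Rabs (x' / INR b ^ m - x)) (Rabs_pos _)) as [p [Hp1 _]].
    assert (Ht : 0 <= (x + INR p) * INR b ^ m - x').
    { assert (x' / INR b ^ m - x <= INR p) by (eapply Rle_trans; [apply RRle_abs| exact Hp1]).
      assert (x' <= (x + INR p) * INR b ^ m).
      { replace x' with (x' / INR b ^ m * INR b ^ m) by (field; lra). nra. }
      lra. }
    destruct (nat_ceil _ Ht) as [j [Hj1 Hj2]].
    exists ((x' + INR j) / INR b ^ m - INR p). split.
    - replace ((x' + INR j) / INR b ^ m - INR p - x) with ((INR j - ((x + INR p) * INR b ^ m - x')) / INR b ^ m)
        by (field; lra).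
      rewrite Rabs_pos_eq.
      + apply Rle_lt_trans with (/ INR b ^ m); auto.
        unfold Rdiv. rewrite <- (Rmult_1_l (/ INR b ^ m)) at 2.
        apply Rmult_le_compat_r; [left; apply Rinv_0_lt_compat|]; lra.
      + unfold Rdiv. apply Rmult_le_pos; [lra| left; apply Rinv_0_lt_compat; lra].
    - apply Sc. apply Hx'. }
  apply (close_bound (fun z => aa b df 1 N z J - aa b df 1 N z J')).
  - apply continuity_pt_filterlim. apply ctn_minus; apply aa_cont; auto.
  - intros eps Heps. destruct (Sd eps Heps) as [z [Hz Hq]]. exists z. split; auto.
Qed.


Lemma series_tail (t : nat -> R) l bb C N0 : infinite_sum t l -> 1 < bb ->
  (forall n, Rabs (t n) <= C / bb ^ S n) -> Rabs (l - psum t N0) <= C / (bb - 1) / bb ^ N0.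
Proof.
  intros Hs Hb Ht. apply (lim_bound (sum_f_R0 t) l _ _ N0 Hs).
  intros m Hm. rewrite sum_f_R0_psum. apply tail_bound'; auto.
Qed.

Lemma zero_of_bound r A bb : 1 < bb -> 0 <= A -> (forall N, Rabs r <= A / bb ^ N) -> r = 0.
Proof.
  intros Hb HA H. destruct (Req_dec r 0) as [|Hne]; auto. exfalso.
  assert (Hr : 0 < Rabs r) by (apply Rabs_pos_lt; auto).
  assert (Hib : Rabs (/ bb) < 1).
  { rewrite Rabs_pos_eq by (left; apply Rinv_0_lt_compat; lra).
    rewrite <- Rinv_1. apply Rinv_lt_contravar; lra. }
  destruct (pow_lt_1_zero _ Hib (Rabs r / (A + 1)) ltac:(apply Rdiv_lt_0_compat; lra)) as [N HN].
  specialize (HN N (le_n N)). rewrite pow_inv in HN.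
  assert (Hbp : 0 < bb ^ N) by (apply pow_lt; lra).
  rewrite Rabs_pos_eq in HN by (left; apply Rinv_0_lt_compat; lra).
  specialize (H N).
  assert (A / bb ^ N <= A * (Rabs r / (A + 1))) by (unfold Rdiv; apply Rmult_le_compat_l; lra).
  assert (A * (Rabs r / (A + 1)) < Rabs r).
  { unfold Rdiv. apply Rmult_lt_reg_r with (A + 1); [lra|].
    rewrite Rmult_assoc, Rmult_assoc, Rinv_l by lra. nra. }
  lra.
Qed.

Lemma RInt_minus' (f g : R -> R) a b : ex_RInt f a b -> ex_RInt g a b -> RInt (fun x => f x - g x) a b = RInt f a b - RInt g a b.
Proof. intros H1 H2. exact (RInt_minus f g a b H1 H2). Qed.
Lemma RInt_plus' (f g : R -> R) a b : ex_RInt f a b -> ex_RInt g a b -> RInt (fun x => f x + g x) a b = RInt f a b + RInt g a b.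
Proof. intros H1 H2. exact (RInt_plus f g a b H1 H2). Qed.
Lemma exR (f : R -> R) : (forall z, continuous f z) -> forall a b, ex_RInt f a b.
Proof. intros H a b. exact (ex_RInt_continuous f a b (fun z _ => H z)). Qed.

Lemma lip_cont (f : R -> R) L : 0 <= L -> (forall x y, Rabs (f x - f y) <= L * Rabs (x - y)) -> continuity f.
Proof.
  intros HL H x. apply continuity_pt_locally. intros eps.
  exists (mkposreal (eps / (L + 1)) ltac:(apply Rdiv_lt_0_compat; [apply cond_pos|lra])).
  intros y Hy. simpl in Hy. unfold ball in Hy; simpl in Hy; unfold AbsRing_ball, abs, minus, plus, opp in Hy; simpl in Hy.
  eapply Rle_lt_trans; [apply H|].
  assert (Hep := cond_pos eps).
  assert (L * Rabs (y - x) <= L * (eps / (L+1))) by (apply Rmult_le_compat_l; [lra| unfold Rminus; lra]).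
  assert (L * (eps / (L + 1)) < eps).
  { unfold Rdiv. apply Rmult_lt_reg_r with (L + 1); [lra|].
    rewrite Rmult_assoc, Rmult_assoc, Rinv_l by lra. nra. }
  lra.
Qed.

Lemma RInt_period (F : R -> R) : (forall z, continuous F z) -> (forall x, F (x + 1) = F x) ->
  forall n, RInt F 0 (INR n) = INR n * RInt F 0 1.
Proof.
  intros Hc Hp n. induction n.
  - simpl INR. rewrite Rmult_0_l. exact (RInt_point 0 F).
  - rewrite S_INR. rewrite <- (RInt_Chasles F 0 (INR n) (INR n + 1)) by (apply exR; auto).
    change (plus ?a ?b) with (a + b). rewrite IHn.
    assert (Hl := RInt_comp_lin F 1 (INR n) 0 1 (exR F Hc _ _)).
    replace (1 * 0 + INR n) with (INR n) in Hl by ring.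
    replace (1 * 1 + INR n) with (INR n + 1) in Hl by ring.
    rewrite <- Hl.
    rewrite (RInt_ext (fun y => scal 1 (F (1 * y + INR n))) F).
    + lra.
    + intros y _. change (scal 1 (F (1 * y + INR n))) with (1 * F (1 * y + INR n)).
      rewrite Rmult_1_l, Rmult_1_l. apply shift_nat; auto.
Qed.

Lemma RInt_dilate (F : R -> R) (b : nat) : (forall z, continuous F z) -> (forall x, F (x + 1) = F x) -> (0 < b)%nat ->
  RInt (fun y => F (INR b * y)) 0 1 = RInt F 0 1.
Proof.
  intros Hc Hp Hb.
  assert (Hbp : 0 < INR b) by (apply lt_0_INR; auto).
  assert (Hcl : forall z, continuous (fun y => F (INR b * y + 0)) z).
  { intros z. apply (continuous_comp (fun y => INR b * y + 0) F).
    - assert (Hx : ex_derive (fun y => INR b * y + 0) z) by (auto_derive; auto).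
      exact (ex_derive_continuous _ _ Hx).
    - auto. }
  assert (Hl := RInt_comp_lin F (INR b) 0 0 1 (exR F Hc _ _)).
  rewrite RInt_scal in Hl by (apply exR; auto).
  replace (INR b * 0 + 0) with 0 in Hl by ring.
  replace (INR b * 1 + 0) with (INR b) in Hl by ring.
  rewrite RInt_period in Hl by auto.
  change (scal (INR b) ?a) with (INR b * a) in Hl.
  rewrite (RInt_ext (fun y => F (INR b * y + 0)) (fun y => F (INR b * y))) in Hl
    by (intros; rewrite Rplus_0_r; auto).
  apply Rmult_eq_reg_l with (INR b); lra.
Qed.


Definition uu (b:nat) (psi:R->R) x n := psi (x / INR b ^ S n) - psi 0.

Lemma uu_diff b psi df M x y n : (2<=b)%nat -> (forall x, derivable_pt_lim psi x (df x)) ->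
  (forall x, Rabs (df x) <= M) ->
  Rabs (uu b psi x n - uu b psi y n) <= M * Rabs (x - y) / INR b ^ S n.
Proof.
  intros Hb Hd HM. assert (H1 := bpos b Hb).
  assert (Hbp : 0 < INR b ^ S n) by (apply pow_lt; lra).
  unfold uu. replace (psi (x / INR b ^ S n) - psi 0 - (psi (y / INR b ^ S n) - psi 0))
    with (psi (x / INR b ^ S n) - psi (y / INR b ^ S n)) by ring.
  eapply Rle_trans; [apply (lip_from_deriv psi df M Hd HM)|].
  replace (x / INR b ^ S n - y / INR b ^ S n) with ((x - y) * / INR b ^ S n) by (field; lra).
  rewrite Rabs_mult, (Rabs_pos_eq (/ INR b ^ S n)) by (left; apply Rinv_0_lt_compat; lra).
  right. unfold Rdiv. ring.
Qed.

Lemma uu_ex b psi df M x : (2<=b)%nat -> (forall x, derivable_pt_lim psi x (df x)) ->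
  (forall x, Rabs (df x) <= M) -> ex_series (uu b psi x).
Proof.
  intros Hb Hd HM. assert (H1 := bpos b Hb).
  refine (@ex_series_le R_AbsRing R_CompleteNormedModule (uu b psi x) (fun n => scal (M * Rabs x / INR b) ((/ INR b)^n)) _ _).
  - intros n. change (norm (uu b psi x n)) with (Rabs (uu b psi x n)).
    replace (uu b psi x n) with (uu b psi x n - uu b psi 0 n)
      by (unfold uu; unfold Rdiv; rewrite Rmult_0_l; ring).
    eapply Rle_trans; [apply (uu_diff b psi df M); auto|].
    change (scal (M * Rabs x / INR b) ((/ INR b) ^ n)) with (M * Rabs x / INR b * (/ INR b) ^ n).
    rewrite pow_inv. replace (x - 0) with x by ring.
    assert (INR b ^ n <> 0) by (apply pow_nonzero; lra).
    right. simpl pow. field. split; lra.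
  - assert (Hg : ex_series (fun n => (/ INR b) ^ n)).
    { exists (/(1 - /INR b)). apply is_series_geom.
      rewrite Rabs_pos_eq by (left; apply Rinv_0_lt_compat; lra).
      rewrite <- Rinv_1. apply Rinv_lt_contravar; lra. }
    exact (@ex_series_scal_l R_AbsRing R_NormedModule (M * Rabs x / INR b) _ Hg).
Qed.

Lemma isum_minus f g lf lg : infinite_sum f lf -> infinite_sum g lg -> infinite_sum (fun n => f n - g n) (lf - lg).
Proof.
  intros H1 H2. apply is_series_Reals. apply is_series_Reals in H1, H2.
  exact (is_series_minus f g lf lg H1 H2).
Qed.

Lemma cohom_of_bound b psi df M C : Zperiodic psi -> (forall x, derivable_pt_lim psi x (df x)) ->
  (forall x, Rabs (df x) <= M) -> 0 <= M -> (2<=b)%nat -> 0 <= C ->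
  RInt psi 0 1 = 0 ->
  (forall N x, Rabs (aa b df 1 N x 1 - aa b df 1 N x 0) <= C / INR b ^ N) -> cohom_zero b psi.
Proof.
  intros Hp Hd HM HM0 Hb HC Hint Hbd. assert (H1 := bpos b Hb).
  set (F := fun x => Series (uu b psi x)).
  assert (Fis : forall x, infinite_sum (uu b psi x) (F x)).
  { intros x. apply is_series_Reals. apply Series_correct. apply (uu_ex b psi df M); auto. }
  assert (FT : forall x, F (INR b * x) = psi x - psi 0 + F x).
  { intros x. unfold F. rewrite Series_incr_1 by (apply (uu_ex b psi df M); auto).
    f_equal.
    - unfold uu. f_equal. f_equal. simpl. field. lra.
    - apply Series_ext. intros n. unfold uu. f_equal. f_equal.
      assert (INR b ^ n <> 0) by (apply pow_nonzero; lra). simpl. field. split; lra. }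
  assert (Flip : forall x y, Rabs (F x - F y) <= M / (INR b - 1) * Rabs (x - y)).
  { intros x y.
    assert (Hs := isum_minus _ _ _ _ (Fis x) (Fis y)).
    assert (Ht := series_tail _ _ (INR b) (M * Rabs (x - y)) 0 Hs H1 (fun n => uu_diff b psi df M x y n Hb Hd HM)).
    simpl psum in Ht. simpl pow in Ht. rewrite Rminus_0_r in Ht.
    replace (M / (INR b - 1) * Rabs (x - y)) with (M * Rabs (x - y) / (INR b - 1) / 1) by (field; lra). exact Ht. }
  assert (Dc : forall x y, F (y + 1) - F y = F (x + 1) - F x).
  { intros x y. apply Rminus_diag_uniq.
    apply (zero_of_bound _ ((C + 2 * M / (INR b - 1)) * Rabs (y - x)) (INR b)); auto.
    { apply Rmult_le_pos; [|apply Rabs_pos]. assert (0 <= 2 * M / (INR b - 1)) by (apply Rdiv_le_0_compat; lra). lra. }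
    intros N.
    set (t := fun n => (uu b psi (y+1) n - uu b psi y n) - (uu b psi (x+1) n - uu b psi x n)).
    assert (Hs : infinite_sum t ((F (y + 1) - F y) - (F (x + 1) - F x))).
    { apply isum_minus; apply isum_minus; auto. }
    assert (Htb : forall n, Rabs (t n) <= 2 * M * Rabs (y - x) / INR b ^ S n).
    { intros n. unfold t.
      replace ((uu b psi (y+1) n - uu b psi y n) - (uu b psi (x+1) n - uu b psi x n)) with
        ((uu b psi (y+1) n - uu b psi (x+1) n) - (uu b psi y n - uu b psi x n)) by ring.
      eapply Rle_trans; [apply Rabs_triang|]. rewrite Rabs_Ropp.
      assert (Q1 := uu_diff b psi df M (y+1) (x+1) n Hb Hd HM).
      assert (Q2 := uu_diff b psi df M y x n Hb Hd HM).
      replace (y + 1 - (x + 1)) with (y - x) in Q1 by ring.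
      replace (2 * M * Rabs (y - x) / INR b ^ S n) with (M * Rabs (y - x) / INR b ^ S n + M * Rabs (y - x) / INR b ^ S n)
        by (field; apply pow_nonzero; lra).
      lra. }
    assert (Ht := series_tail _ _ _ _ N Hs H1 Htb).
    set (h := fun z => Pq b psi 1 N (fun _ => INR 1) z - Pq b psi 1 N (fun _ => INR 0) z).
    assert (Hpt : psum t N = h y - h x).
    { unfold h, t, uu, Pq. rewrite <- !psum_minus. apply psum_ext. intros n _. rewrite pow1.
      change (INR 1) with 1. change (INR 0) with 0. rewrite !Rplus_0_r. ring. }
    assert (Hh : Rabs (h y - h x) <= C / INR b ^ N * Rabs (y - x)).
    { apply (lip_from_deriv h (fun z => aa b df 1 N z 1 - aa b df 1 N z 0)).
      - intros z. unfold h.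
        exact (derivable_pt_lim_minus _ _ z _ _ (Pq_deriv b psi df 1 N _ z ltac:(lia) Hd)
                 (Pq_deriv b psi df 1 N _ z ltac:(lia) Hd)).
      - intros z. apply Hbd. }
    rewrite Hpt in Ht.
    set (dd := F (y + 1) - F y - (F (x + 1) - F x)) in *.
    replace dd with ((dd - (h y - h x)) + (h y - h x)) by ring.
    eapply Rle_trans; [apply Rabs_triang|].
    assert (INR b ^ N <> 0) by (apply pow_nonzero; lra).
    replace ((C + 2 * M / (INR b - 1)) * Rabs (y - x) / INR b ^ N) with
      (2 * M * Rabs (y - x) / (INR b - 1) / INR b ^ N + C / INR b ^ N * Rabs (y - x)) by (field; lra).
    lra. }
  set (a := F (0 + 1) - F 0).
  assert (Fsh : forall x, F (x + 1) = F x + a).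
  { intros x. unfold a. assert (HH := Dc 0 x). lra. }
  assert (Fn : forall n x, F (x + INR n) = F x + INR n * a).
  { induction n; intros x.
    - simpl. rewrite Rplus_0_r. ring.
    - rewrite S_INR. replace (x + (INR n + 1)) with ((x + INR n) + 1) by ring. rewrite Fsh, IHn. ring. }
  assert (Ha : a = 0).
  { assert (E1 := FT 1). assert (E0 := FT 0).
    rewrite Rmult_1_r in E1. rewrite Rmult_0_r in E0.
    replace (INR b) with (0 + INR b) in E1 by ring. rewrite Fn in E1.
    replace 1 with (0 + 1) in E1 at 2 by ring. rewrite Fsh in E1.
    assert (Hp1 := Hp 0). rewrite Rplus_0_l in Hp1. rewrite Hp1 in E1.
    assert ((INR b - 1) * a = 0) by lra.
    apply Rmult_integral in H. destruct H; auto. lra. }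
  assert (Fper : forall x, F (x + 1) = F x) by (intros; rewrite Fsh, Ha; ring).
  assert (Fcont : continuity F).
  { apply (lip_cont F (M / (INR b - 1))); auto. apply Rdiv_le_0_compat; lra. }
  assert (Fc' : forall z, continuous F z) by (intros; apply continuity_pt_filterlim; apply Fcont).
  assert (Hpsi0 : psi 0 = 0).
  { assert (Hext : RInt psi 0 1 = RInt (fun y => (F (INR b * y) - F y) + psi 0) 0 1).
    { assert (Hpt : forall y, psi y = F (INR b * y) - F y + psi 0) by (intros; rewrite FT; ring).
      apply RInt_ext. intros y _. apply Hpt. }
    rewrite Hext in Hint.
    assert (Hcb : forall z, continuous (fun y => F (INR b * y)) z).
    { intros z. apply (continuous_comp (fun y => INR b * y) F).
      - assert (Hx : ex_derive (fun y => INR b * y) z) by (auto_derive; auto).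
        exact (ex_derive_continuous _ _ Hx).
      - auto. }
    rewrite RInt_plus' in Hint.
    - rewrite RInt_minus' in Hint by (apply exR; auto).
      rewrite RInt_dilate in Hint by (auto; lia).
      rewrite RInt_const in Hint. change (scal (1 - 0) (psi 0)) with ((1 - 0) * psi 0) in Hint. lra.
    - apply exR. intros z. apply ctn_minus; auto.
    - apply ex_RInt_const. }
  exists F. split; [|split]; auto.
  intros x. rewrite FT, Hpsi0. ring.
Qed.


Lemma shift_Z (f : R -> R) : (forall x, f (x+1) = f x) -> forall z k, f (z + IZR k) = f z.
Proof.
  intros H z k. destruct (Z_le_gt_dec 0 k) as [Hk|Hk].
  - rewrite <- (Z2Nat.id k Hk), <- INR_IZR_INZ. apply shift_nat; auto.
  - replace k with (- Z.of_nat (Z.to_nat (- k)))%Z by lia.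
    rewrite opp_IZR, <- INR_IZR_INZ.
    rewrite <- (shift_nat f H (z + - INR (Z.to_nat (- k))) (Z.to_nat (-k))).
    f_equal. ring.
Qed.

Lemma df_bounded psi df : Zperiodic psi -> (forall x, derivable_pt_lim psi x (df x)) -> continuity df ->
  exists M, 0 < M /\ forall x, Rabs (df x) <= M.
Proof.
  intros Hp Hd Hc.
  destruct (continuity_ab_maj (fun x => Rabs (df x)) 0 1 ltac:(lra)) as [Mx [HMx _]].
  { intros c _. exact (continuity_pt_comp df Rabs c (Hc c) (Rcontinuity_abs _)). }
  exists (Rabs (df Mx) + 1). split; [assert (0 <= Rabs (df Mx)) by apply Rabs_pos; lra|].
  intros x. destruct (archimed x) as [A1 A2].
  set (z := x - IZR (up x - 1)).
  assert (Hz : df x = df z).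
  { unfold z. rewrite <- (shift_Z df (df_per psi df Hp Hd) (x - IZR (up x - 1)) (up x - 1)). f_equal; ring. }
  rewrite Hz. assert (Hz01 : 0 <= z <= 1) by (unfold z; rewrite minus_IZR; simpl; lra).
  specialize (HMx z Hz01). simpl in HMx. lra.
Qed.

Theorem lemma2p7 (b : nat) (psi : R -> R)
  (hb : (2 <= b)%nat)
  (hper : Zperiodic psi)
  (hC1 : isC1 psi)
  (hcoh : ~ cohom_zero b psi)
  (hint : exists pr : Riemann_integrable psi 0 1, RiemannInt pr = 0) :
  exists gamma1 : R, 0 < gamma1 < 1 /\
  exists N : nat, (0 < N)%nat /\
    forall gamma : R, gamma1 < gamma < 1 -> / INR b < gamma ->
      forall x : R, ~ E_full b gamma psi N x.
Proof.
  destruct hC1 as [df [Hd Hdc]].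
  destruct hint as [pr Hpr].
  assert (Hint : RInt psi 0 1 = 0) by (rewrite (RInt_Reals psi 0 1 pr); auto).
  assert (H1 := bpos b hb).
  destruct (df_bounded psi df hper Hd Hdc) as [M [HM0 HM]].
  set (K := M / (INR b - 1)).
  assert (HK : 0 < K) by (unfold K; apply Rdiv_lt_0_compat; lra).
  destruct (classic (exists gamma1 : R, 0 < gamma1 < 1 /\
    exists N : nat, (0 < N)%nat /\
    forall gamma : R, gamma1 < gamma < 1 -> / INR b < gamma ->
      forall x : R, ~ E_full b gamma psi N x)) as [G|G]; [exact G|].
  exfalso. apply hcoh.
  apply (cohom_of_bound b psi df M (3 * K)); auto; try lra.
  intros N x. apply (spread b psi df (3 * K)); auto; try lra.
  clear N x. intros N.
  destruct N as [|N'].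
  { exists 0. intros J J'. unfold aa, dPq. simpl. rewrite Rminus_0_r, Rabs_R0. lra. }
  set (N := S N').
  assert (HbN : 0 < INR b ^ N) by (apply pow_lt; lra).
  set (A := 2 * INR N * INR N * M).
  assert (HA : 0 <= A) by (unfold A; assert (0 <= INR N) by apply pos_INR; nra).
  set (Q := K / INR b ^ N).
  assert (HQ : 0 < Q) by (unfold Q; apply Rdiv_lt_0_compat; lra).
  set (eps := Q / (A + 1)).
  assert (Heps : 0 < eps) by (unfold eps; apply Rdiv_lt_0_compat; lra).
  set (g1 := / (1 + eps)).
  assert (Hg1 : 0 < g1 < 1).
  { unfold g1. split; [apply Rinv_0_lt_compat; lra|]. rewrite <- Rinv_1. apply Rinv_lt_contravar; lra. }
  assert (Hex : exists g, g1 < g < 1 /\ / INR b < g /\ exists x, E_full b g psi N x).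
  { apply NNPP. intro Hn. apply G. exists g1. split; auto. exists N. split; [unfold N; lia|].
    intros g Hg Hgb x HE. apply Hn. exists g. repeat split; try lra. exists x; auto. }
  destruct Hex as [g [Hg [Hgb [x HE]]]].
  exists x. intros J J'.
  assert (Hg01 : 0 <= g <= 1) by lra.
  assert (B1 := Efull_bound b psi df M g N x hper Hd HM hb Hg01 HE J J').
  assert (B2 := aa_gamma b df M g N x J HM hb Hg01).
  assert (B3 := aa_gamma b df M g N x J' HM hb Hg01).
  assert (Hge : 1 - g <= eps).
  { assert (1 < g * (1 + eps)).
    { unfold g1 in Hg. apply Rmult_lt_reg_r with (/ (1 + eps)). apply Rinv_0_lt_compat; lra.
      rewrite Rmult_assoc, Rinv_r, Rmult_1_l, Rmult_1_r by lra. lra. }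
    nra. }
  assert (Hnum : INR N * (INR N * (1 - g) * M) * 2 <= Q).
  { replace (INR N * (INR N * (1 - g) * M) * 2) with (A * (1 - g)) by (unfold A; ring).
    apply Rle_trans with (A * eps). apply Rmult_le_compat_l; lra.
    unfold eps. unfold Rdiv. apply Rmult_le_reg_r with (A + 1); [lra|].
    rewrite Rmult_assoc, Rmult_assoc, Rinv_l by lra. nra. }
  fold K in B1. fold Q in B1.
  replace (aa b df 1 N x J - aa b df 1 N x J') with
    ((aa b df g N x J - aa b df g N x J') - (aa b df g N x J - aa b df 1 N x J) + (aa b df g N x J' - aa b df 1 N x J')) by ring.
  eapply Rle_trans; [apply Rabs_triang|].
  eapply Rle_trans; [apply Rplus_le_compat_r; apply Rabs_triang|].
  rewrite Rabs_Ropp.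
  replace (3 * K / INR b ^ N) with (3 * Q) by (unfold Q; field; lra).
  lra.
Qed.
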